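(* Let $w\ge0$ be integrable on $\mathbb{T}$ and let $I\subset\mathbb{T}$ be an arc with $\int_I\log w\,dm>-\infty$. Let $p>0$ and let $\{f_n\}_{n\ge1}$ be positive functions on $\mathbb{T}$ with $\int_I f_n^p\,w\,dm<C$ for all $n$, for some constant $C>0$. Then the sequence of measures $\{\log^+f_n\,dm\}_{n\ge1}$ is uniformly absolutely continuous on $I$.
   Context: $m$ is normalized arc-length measure on the unit circle $\mathbb{T}$; $\log^+x=\max(0,\log x)$. A sequence of non-negative measures $\{g_n\,dm\}$ is uniformly absolutely continuous on $I$ if for every $\epsilon>0$ there is $\delta>0$, independent of $n$, such that every Borel set $A\subset I$ with $m(A)<\delta$ satisfies $\int_A g_n\,dm<\epsilon$ for all $n$. *)

(* Defs.v *)
From HB Require Import structures.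
From mathcomp Require Import all_boot all_order all_algebra.
From mathcomp Require Import all_classical all_reals all_analysis.
Set Implicit Arguments. Unset Strict Implicit. Unset Printing Implicit Defensive.
Import Order.TTheory GRing.Theory Num.Theory.
Local Open Scope ring_scope.

(* The unit circle T is modelled as R/Z: functions on T are 1-periodic
   functions on R, and normalized arc length m corresponds to Lebesgue
   measure on a period (t |-> exp(2 pi i t)). *)
Definition periodic1 (R : realType) (f : R -> R) : Prop :=
  forall x, f (x + 1) = f x.

Definition logE (R : realType) (x : R) : \bar R :=
  if x == 0 then -oo%E else (ln x)%:E.

Definition logplus (R : realType) (x : R) : R := Num.max 0 (ln x).

(* Main.v *)
Require Import Defs.
From HB Require Import structures.
From mathcomp Require Import all_boot all_order all_algebra.
From mathcomp Require Import all_classical all_reals all_analysis.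
From mathcomp Require Import measurable_realfun.
From mathcomp Require Import lra ring.
Import Order.TTheory GRing.Theory Num.Theory.
Local Open Scope ring_scope.
Local Open Scope classical_set_scope.
Lemma abscont d (T : measurableType d) (R : realType)
  (mu : {measure set T -> \bar R}) (D : set T) (h : T -> \bar R) :
  measurable D -> measurable_fun D h -> (forall x, D x -> (0 <= h x)%E) ->
  (\int[mu]_(x in D) h x < +oo)%E ->
  forall e : R, 0 < e -> exists2 del : R, 0 < del &
    forall A, measurable A -> A `<=` D -> (mu A < del%:E)%E ->
      (\int[mu]_(x in A) h x < e%:E)%E.
Proof.
move=> mD mh h0 hfin e e0.
pose g n x := Order.min (h x) (n%:R)%:E.
have mg n : measurable_fun D (g n).
  by apply: measurable_mine.
have g0 n x : D x -> (0 <= g n x)%E.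
  by move=> Dx; rewrite /g le_min h0 //=.
have gh n x : (g n x <= h x)%E by rewrite /g ge_min lexx.
have gN n x : (g n x <= (n%:R)%:E)%E by rewrite /g ge_min lexx orbT.
have nd x : D x -> {homo g^~ x : n m / (n <= m)%N >-> (n <= m)%E}.
  move=> _ m n mn; rewrite /g le_min !ge_min lexx lee_fin ler_nat mn.
  by rewrite !orbT.
have lim x : D x -> limn (g^~ x) = h x.
  move=> Dx; apply/cvg_lim => //; rewrite /g.
  move: (h0 x Dx); case: (h x) => [r| |] // r0.
  - apply: cvg_near_cst; near=> n; rewrite min_l // lee_fin.
    near: n; exact: nbhs_infty_ger.
  - under eq_fun do rewrite min_r ?leey //.
    by apply/cvgenyP; exact: cvg_id.
have := @cvg_monotone_convergence _ _ _ mu _ mD _ mg g0 nd.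
rewrite (eq_integral h); last by move=> x /[1!inE] /lim.
have hfn : (\int[mu]_(x in D) h x)%E \is a fin_num.
  by rewrite ge0_fin_numE // integral_ge0.
rewrite -(fineK hfn); set L := fine _.
move/fine_cvgP => [Hfin /cvgrPdist_lt Hc].
have e20 : 0 < e / 2 by rewrite divr_gt0.
have [N _ HN] : \forall n \near \oo,
   (\int[mu]_(x in D) g n x)%E \is a fin_num /\
   `|L - fine (\int[mu]_(x in D) g n x)| < e / 2.
  by near=> n; split; near: n; [exact: Hfin| exact: Hc].
have [GN HGN] := HN N (leqnn N).
set G := (\int[mu]_(x in D) g N x)%E.
have GE : G = (fine G)%:E by rewrite fineK.
pose k x := (h x - g N x)%E.
have gfin x : D x -> g N x \is a fin_num.
  by move=> Dx; rewrite ge0_fin_numE ?g0 // (le_lt_trans (gN N x)) // ltry.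
have hk x : D x -> h x = (g N x + k x)%E.
  by move=> Dx; rewrite /k addeC subeK // gfin.
have k0 x : D x -> (0 <= k x)%E.
  by move=> Dx; rewrite /k sube_ge0 ?gfin ?gh.
have mk : measurable_fun D k by apply: emeasurable_funB.
have hD : (L%:E = G + \int[mu]_(x in D) k x)%E.
  rewrite fineK // -ge0_integralD //; first by apply: eq_integral => x /[1!inE] /hk.
  by move=> x Dx; exact: g0.
have kD : (\int[mu]_(x in D) k x < (e / 2)%:E)%E.
  have -> : (\int[mu]_(x in D) k x = (L - fine G)%:E)%E.
    by rewrite EFinB hD -GE (addeC G) addeK.
  by rewrite lte_fin (le_lt_trans (ler_norm _) HGN).
have dpos : 0 < 2 * (N%:R + 1) :> R by rewrite mulr_gt0 // ltr_wpDl.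
exists (e / (2 * (N%:R + 1))); first by rewrite divr_gt0.
move=> A mA AD muA.
have hA : (\int[mu]_(x in A) h x =
   \int[mu]_(x in A) g N x + \int[mu]_(x in A) k x)%E.
  rewrite -ge0_integralD //.
  - by apply: eq_integral => x /[1!inE] /AD /hk.
  - by move=> x /AD; exact: g0.
  - exact: measurable_funS mD AD (mg N).
  - by move=> x /AD; exact: k0.
  - exact: measurable_funS mD AD mk.
have gA : (\int[mu]_(x in A) g N x <= (N%:R)%:E * mu A)%E.
  rewrite -integral_cst //; apply: ge0_le_integral => //.
  all: try by move=> x /AD; exact: g0.
  all: try exact: measurable_funS mD AD (mg N).
  all: try by move=> x _; exact: gN.
have kA : (\int[mu]_(x in A) k x <= \int[mu]_(x in D) k x)%E.
  exact: ge0_subset_integral.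
have Nd : ((N%:R)%:E * mu A <= (N%:R * (e / (2 * (N%:R + 1))))%:E)%E.
  rewrite EFinM; apply: lee_wpmul2l; first by rewrite lee_fin.
  exact: ltW.
have Nd2 : N%:R * (e / (2 * (N%:R + 1))) <= e / 2.
  rewrite mulrA ler_pdivrMr // mulrA divfK //; nra.
rewrite hA (splitr e) EFinD.
apply: le_lt_trans (leeD (le_trans gA Nd) kA) _.
apply: lee_ltD => //; by rewrite lee_fin.
Unshelve. all: by end_near. Qed.
Lemma key (R : realType) (p s F W : R) : 0 < p -> 0 < s -> 0 < F -> 0 < W ->
  s <= 1 ->
  p * logplus F <= - ln s + s * (F `^ p * W) + Num.max (- ln W) 0.
Proof.
move=> p0 s0 F0 W0 s1.
have lnP : ln (F `^ p) = p * ln F by rewrite ln_powR.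
have P0 : 0 < F `^ p by rewrite powR_gt0.
set P := F `^ p in lnP P0 *.
have PW0 : 0 < P * W by rewrite mulr_gt0.
have sPW0 : 0 < s * (P * W) by rewrite mulr_gt0.
have H : ln (s * (P * W)) = ln s + (ln P + ln W).
  by rewrite lnM ?posrE // lnM ?posrE.
have Hle : ln (s * (P * W)) <= s * (P * W).
  set y := s * (P * W) in sPW0 *.
  have e1 : 1 + (y - 1) = y by lra.
  have := @le_ln1Dx R (y - 1); rewrite e1 => Hy.
  have : ln y <= y - 1 by apply: Hy; lra.
  lra.
have lns : ln s <= 0 by rewrite ln_le0.
have m1 : - ln W <= Num.max (- ln W) 0 by rewrite le_max lexx.
have m2 : 0 <= Num.max (- ln W) 0 by rewrite le_max lexx orbT.
set M := Num.max _ _ in m1 m2 *.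
set Y := s * (P * W) in sPW0 H Hle *.
have [h|h] := leP (ln F) 0.
- have m3 : logplus F <= 0 by rewrite /logplus ge_max lexx h.
  have : p * logplus F <= 0 by rewrite pmulr_rle0.
  lra.
- have m3 : logplus F <= ln F by rewrite /logplus ge_max lexx (ltW h).
  have : p * logplus F <= p * ln F by rewrite ler_pM2l.
  lra.
Qed.
Lemma mlogE (R : realType) : measurable_fun setT (@logE R).
Proof.
have -> : @logE R = (fun x => if x == 0 then cst (-oo)%E x else (EFin \o (@ln R)) x).
  by apply/funext => x.
apply: measurable_fun_ifT.
- apply: measurable_fun_eqr; [exact: measurable_id | exact: measurable_cst].
- exact: measurable_cst.
- by apply/measurable_EFinP; exact: measurable_ln.
Qed.

Theorem mainTheorem10 (R : realType) (w : R -> R) (a b p C : R)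
    (f : nat -> R -> R) :
  (forall x, 0 <= w x) -> periodic1 w -> measurable_fun setT w ->
  (@lebesgue_measure R).-integrable `[0, 1] (EFin \o w) ->
  a < b -> b - a <= 1 ->
  (-oo < \int[@lebesgue_measure R]_(x in `[a, b]) logE (w x))%E ->
  0 < p -> 0 < C ->
  (forall n, periodic1 (f n)) ->
  (forall n, measurable_fun setT (f n)) ->
  (forall n x, 0 < f n x) ->
  (forall n, (\int[@lebesgue_measure R]_(x in `[a, b])
                 ((f n x) `^ p * w x)%:E < C%:E)%E) ->
  forall eps : R, 0 < eps ->
  exists2 delta : R, 0 < delta &
    forall A : set R, measurable A -> A `<=` `[a, b] ->
      (@lebesgue_measure R A < delta%:E)%E ->
      forall n, (\int[@lebesgue_measure R]_(x in A)
                   (logplus (f n x))%:E < eps%:E)%E.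
Proof.
move=> w0 _ mw _ ab _ hlog p0 C0 _ mf fpos fint eps eps0.
set mu := @lebesgue_measure R.
set I := `[a, b] : set R.
have mI : measurable I by exact: measurable_itv.
pose hE := funeneg (fun x => logE (w x)).
have mlw : measurable_fun setT (fun x => logE (w x)).
  exact: measurableT_comp (@mlogE R) mw.
have mh : measurable_fun I hE.
  by apply: measurable_funeneg; exact: measurable_funS mlw.
have h0 x : I x -> (0 <= hE x)%E by move=> _; exact: funeneg_ge0.
have hfin : (\int[mu]_(x in I) hE x < +oo)%E.
  rewrite ltey; apply/eqP => Qoo; move: hlog; rewrite integralE -/hE.
  rewrite -/mu -/I Qoo.
  by case: (\int[mu]_(x in I) _)%E.
have pe0 : 0 < p * eps / 2 by rewrite divr_gt0 // mulr_gt0.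
have [d1 d10 Hd1] := @abscont _ _ _ mu I hE mI mh h0 hfin _ pe0.
have C4 : 0 < 4 * C by rewrite mulr_gt0.
pose t := p * eps / (4 * C).
have t0 : 0 < t by rewrite divr_gt0 // mulr_gt0.
pose s := Num.min 1 t.
have s0 : 0 < s by rewrite lt_min ltr01 t0.
have s1 : s <= 1 by rewrite ge_min lexx.
have st : s <= t by rewrite ge_min lexx orbT.
pose K := - ln s.
have K0 : 0 <= K by rewrite /K oppr_ge0 ln_le0.
have K4 : 0 < 4 * (K + 1) by rewrite mulr_gt0 // ltr_wpDl.
pose d2 := p * eps / (4 * (K + 1)).
have d20 : 0 < d2 by rewrite divr_gt0 // mulr_gt0.
exists (Num.min d1 d2); first by rewrite lt_min d10 d20.
move=> A mA AI muA n.
have muA1 : (mu A < d1%:E)%E.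
  by apply: (lt_le_trans muA); rewrite lee_fin ge_min lexx.
have muA2 : (mu A <= d2%:E)%E.
  by apply: (le_trans (ltW muA)); rewrite lee_fin ge_min lexx orbT.
pose g x := f n x `^ p * w x.
have mg : measurable_fun setT g.
  by apply: measurable_funM => //; exact: measurableT_comp (measurable_powR p) (mf n).
have g0 x : 0 <= g x by rewrite mulr_ge0 ?powR_ge0.
have mlogplus : measurable_fun setT (@logplus R).
  by apply: measurable_maxr => //; exact: measurable_ln.
pose lp x := (logplus (f n x))%:E.
have mlp : measurable_fun A lp.
  apply/measurable_EFinP; apply: measurable_funS (measurableT_comp mlogplus (mf n)) => //.
have lp0 x : A x -> (0 <= lp x)%E by move=> _; rewrite lee_fin le_max lexx.
have Hpt x : (p%:E * lp x <= (K + s * g x)%:E + hE x)%E.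
  rewrite /hE funenegE; case: (eqVneq (w x) 0) => wx.
  - by rewrite /logE wx eqxx /= maxye addey // leey.
  - have wpos : 0 < w x by rewrite lt_neqAle eq_sym wx w0.
    rewrite /logE (negbTE wx) -EFinN -EFin_max -EFinM -EFinD lee_fin.
    exact: key.
have mgA : measurable_fun A (fun x => (g x)%:E).
  by apply/measurable_EFinP; exact: measurable_funS mg.
have mhA : measurable_fun A hE by exact: measurable_funS mh.
have mKg : measurable_fun A (fun x => (K + s * g x)%:E).
  apply/measurable_EFinP; apply: measurable_funD => //.
  by apply: measurable_funM => //; exact: measurable_funS mg.
have E1 : (p%:E * \int[mu]_(x in A) lp x = \int[mu]_(x in A) (p%:E * lp x))%E.
  by rewrite ge0_integralZl_EFin // ltW.
have E2 : (\int[mu]_(x in A) (p%:E * lp x) <=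
    \int[mu]_(x in A) ((K + s * g x)%:E + hE x))%E.
  apply: ge0_le_integral => //.
  all: try by move=> x Ax; apply: mule_ge0; [rewrite lee_fin ltW|exact: lp0].
  all: try exact: measurable_funeM.
  all: try exact: emeasurable_funD.
  all: try by move=> x _; exact: Hpt.
have E3 : (\int[mu]_(x in A) ((K + s * g x)%:E + hE x) =
    \int[mu]_(x in A) (K + s * g x)%:E + \int[mu]_(x in A) hE x)%E.
  rewrite ge0_integralD //.
  - by move=> x _; rewrite lee_fin addr_ge0 // mulr_ge0 // ltW.
  - by move=> x /AI; exact: h0.
have E4 : (\int[mu]_(x in A) (K + s * g x)%:E =
    K%:E * mu A + s%:E * \int[mu]_(x in A) (g x)%:E)%E.
  under eq_integral => x _ do rewrite EFinD EFinM.
  rewrite ge0_integralD //; last 2 first.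
    by move=> x _; apply: mule_ge0; rewrite lee_fin ?g0 // ltW.
    by apply: measurable_funeM; exact: mgA.
  congr (_ + _)%E; first exact: integral_cst.
  apply: ge0_integralZl_EFin => //; last exact: ltW.
  by move=> x _; rewrite lee_fin.
have B1 : (K%:E * mu A <= (p * eps / 4)%:E)%E.
  apply: (le_trans (lee_wpmul2l _ muA2)); first by rewrite lee_fin.
  rewrite -EFinM lee_fin /d2.
  rewrite mulrA ler_pdivrMr //.
  have -> : p * eps / 4 * (4 * (K + 1)) = p * eps * (K + 1) by field.
  have pe : 0 < p * eps by rewrite mulr_gt0.
  set q := p * eps in pe *; nra.
have B2 : (s%:E * \int[mu]_(x in A) (g x)%:E <= (p * eps / 4)%:E)%E.
  have gI : (\int[mu]_(x in A) (g x)%:E <= C%:E)%E.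
    apply: le_trans (ltW (fint n)).
    apply: ge0_subset_integral => //.
    - by apply/measurable_EFinP; exact: measurable_funS mg.
    - by move=> x _; rewrite lee_fin.
  apply: (le_trans (lee_wpmul2l _ gI)); first by rewrite lee_fin ltW.
  rewrite -EFinM lee_fin.
  apply: (le_trans (ler_wpM2r (ltW C0) st)).
  have tC : t * C = p * eps / 4.
    rewrite /t; field; by rewrite gt_eqF.
  by rewrite tC.
have B3 : (\int[mu]_(x in A) hE x < (p * eps / 2)%:E)%E.
  exact: Hd1.
have tot : (p%:E * \int[mu]_(x in A) lp x < p%:E * eps%:E)%E.
  rewrite E1 -EFinM; apply: (le_lt_trans E2); rewrite E3 E4.
  apply: (le_lt_trans (leeD (leeD B1 B2) (lexx _))).
  have e3 : ((p * eps)%:E = (p * eps / 4)%:E + (p * eps / 4)%:E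
      + (p * eps / 2)%:E)%E.
    by rewrite -!EFinD; congr EFin; field.
  by rewrite e3 lteD2lE.
by rewrite lte_pmul2l // in tot.
Qed.
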